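(* Let $q$ be a prime power and let $n\ge 3$ be an odd integer. Let $f(x)$ be a SCRIM polynomial of degree $n$ over $\mathbb{F}_{q^2}$. Then $\mathrm{ord}(f(x))\in D_n$. Moreover, if $\alpha\in\mathbb{F}_{q^{2n}}$ is a root of $f(x)$, then $\alpha$ is a primitive $d$-th root of unity for some $d\in D_n$.
   Context: For $f(x)\in\mathbb{F}_{q^2}[x]$ of degree $m$ with $f(0)\neq0$, the reciprocal is $f^*(x)=x^m f(0)^{-1}f(1/x)$, the conjugate of $g(x)=\sum g_ix^i$ is $\overline{g(x)}=\sum g_i^q x^i$, and the conjugate-reciprocal is $f^\dagger(x)=\overline{f^*(x)}$. A polynomial $f$ with $f(0)\ne 0$ is SCRIM if $f=f^\dagger$ and $f$ is irreducible and monic. The order $\mathrm{ord}(f(x))$ of a polynomial with $f(0)\neq0$ is the smallest positive integer $s$ such that $f(x)$ divides $x^s-1$. $D_n$ denotes the set of all positive divisors of $q^n+1$ that do not divide $q^k+1$ for any integer $0\le k<n$. *)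

(* Defs.v *)
From HB Require Import structures.
From mathcomp Require Import all_boot all_order all_algebra all_field.
Set Implicit Arguments. Unset Strict Implicit. Unset Printing Implicit Defensive.
Import GRing.Theory.
Local Open Scope ring_scope.

Section Defs.
Variable F : fieldType.

(* reciprocal f^*(x) = x^m f(0)^{-1} f(1/x), where m = deg f = (size f).-1 *)
Definition recip (f : {poly F}) : {poly F} :=
  (f`_0)^-1 *: \poly_(i < size f) f`_((size f).-1 - i).

Definition pconj (q : nat) (g : {poly F}) : {poly F} := map_poly (fun a => a ^+ q) g.

Definition conj_recip (q : nat) (f : {poly F}) : {poly F} := pconj q (recip f).

Definition SCRIM (q : nat) (f : {poly F}) : Prop :=
  [/\ f`_0 != 0, f = conj_recip q f, irreducible_poly f & f \is monic].

Definition is_poly_order (f : {poly F}) (s : nat) : Prop :=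
  [/\ (0 < s)%N, f %| 'X^s - 1 &
      forall t : nat, (0 < t)%N -> f %| 'X^t - 1 -> (s <= t)%N].
End Defs.

Definition in_D (q n d : nat) : Prop :=
  [/\ (0 < d)%N, (d %| q ^ n + 1)%N &
      forall k : nat, (k < n)%N -> ~~ (d %| q ^ k + 1)%N].

(* Main.v *)
Require Import Defs.
From HB Require Import structures.
From mathcomp Require Import all_boot all_order all_algebra all_field.
From mathcomp Require Import closed_field.
Set Implicit Arguments. Unset Strict Implicit. Unset Printing Implicit Defensive.
Import GRing.Theory.
Local Open Scope ring_scope.

Section QF.
Variables (R : fieldType) (p k : nat) (chR : p \in [pchar R]).
Definition qf of p \in [pchar R] := fun (x : R) => x ^+ (p ^ k)%N.
Lemma qf_nat : ([pchar R]).-nat (p ^ k)%N.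
Proof.
rewrite pnatX; apply/orP; left.
have hp := pcharf_prime chR.
by rewrite (eq_pnat _ (pcharf_eq chR)) pnat_id.
Qed.
Lemma qf_is_nmod : nmod_morphism (qf chR).
Proof.
split=> [|x y]; rewrite /qf.
  by rewrite expr0n expn_eq0 andbC; case: (k); rewrite ?andbF ?andbT //= => ?; rewrite eqn0Ngt prime_gt0 // (pcharf_prime chR).
by rewrite exprDn_pchar // qf_nat.
Qed.
Lemma qf_is_monoid : monoid_morphism (qf chR).
Proof. by split=> [|x y]; rewrite /qf ?expr1n // exprMn. Qed.
HB.instance Definition _ := GRing.isNmodMorphism.Build R R (qf chR) qf_is_nmod.
HB.instance Definition _ := GRing.isMonoidMorphism.Build R R (qf chR) qf_is_monoid.
Lemma qf_inj : injective (qf chR).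
Proof. exact: fmorph_inj. Qed.
Lemma qfE x : qf chR x = x ^+ (p ^ k)%N. Proof. by []. Qed.
End QF.
Section Fixed.
Variables (F : finFieldType) (L : fieldType) (phi : {rmorphism F -> L}).
Lemma fixed_in_image (x : L) : x ^+ #|F| = x -> exists c, phi c = x.
Proof.
move=> hx.
have : root (map_poly phi ('X^#|F| - 'X)) x.
  by rewrite rmorphB /= map_polyXn map_polyX rootE !hornerE hx subrr.
rewrite finField_genPoly rmorph_prod /=.
rewrite (eq_bigr (fun c => 'X - (phi c)%:P)); last by move=> c _; rewrite map_polyXsubC.
rewrite -(big_map phi xpredT (fun z => 'X - z%:P)) root_prod_XsubC.
by case/mapP=> c _ ->; exists c.
Qed.
End Fixed.
Lemma iter_period (T : Type) (g : T -> T) m x : iter m g x = x -> forall c, iter (c * m) g x = x.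
Proof. by move=> h; elim=> [|c IH] //; rewrite mulSn iterD IH h. Qed.

Lemma iter_gcd (T : Type) (g : T -> T) A B x : (0 < A)%N ->
  iter A g x = x -> iter B g x = x -> iter (gcdn A B) g x = x.
Proof.
move=> A0 hA hB; case: (egcdnP B A0) => km kn e _.
have := iter_period hA km; rewrite e addnC iterD.
by rewrite (iter_period hB).
Qed.

Section Sig.
Variables (L : fieldType) (q : nat).
Definition sig (x : L) := (x ^+ q)^-1.
Lemma iter_sig j x : iter j sig x = if odd j then (x ^+ (q ^ j))^-1 else x ^+ (q ^ j).
Proof.
elim: j => [|j IH]; first by rewrite /= expr1.
rewrite iterS IH /sig /=; case: (odd j) => /=.
  by rewrite exprVn invrK -exprM expnSr.
by rewrite -exprM expnSr.
Qed.
End Sig.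
Section Core.
Variables (F : finFieldType) (L : fieldType) (phi : {rmorphism F -> L}) (p k n : nat).
Hypotheses (Hp : prime p) (Hk : (0 < k)%N) (HF : #|F| = ((p ^ k) ^ 2)%N)
  (chF : p \in [pchar F]) (Hn : (3 <= n)%N) (Hodd : odd n).
Variable f : {poly F}.
Hypotheses (Hdeg : size f = n.+1) (Hf : SCRIM (p ^ k)%N f).
Variable a : L.
Hypothesis Ha : root (map_poly phi f) a.

Let chL : p \in [pchar L] := rmorph_pchar phi chF.
Local Notation fL := (map_poly phi f).
Local Notation Q := ((p ^ k) ^ 2)%N.
Definition orb j := a ^+ (Q ^ j).

Lemma Q_eq : Q = (p ^ (k * 2))%N. Proof. by rewrite expnM. Qed.

Lemma fix_F c : phi c ^+ Q = phi c.
Proof. by rewrite -rmorphXn -HF expf_card. Qed.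

Lemma map_tau : map_poly (qf (k * 2) chL) fL = fL.
Proof.
rewrite -map_poly_comp; apply: eq_map_poly => c /=.
by rewrite qfE -Q_eq fix_F.
Qed.

Lemma root_tau x : root fL x -> root fL (x ^+ Q).
Proof.
rewrite !rootE => /eqP h.
by rewrite Q_eq -qfE -{1}map_tau horner_map h rmorph0.
Qed.

Lemma root_orb j : root fL (orb j).
Proof.
elim: j => [|j IH]; first by rewrite /orb expr1.
by rewrite /orb expnSr exprM; apply: root_tau.
Qed.

Lemma fL_neq0 : fL != 0.
Proof. by rewrite -size_poly_eq0 size_map_poly Hdeg. Qed.

Lemma a_neq0 : a != 0.
Proof.
apply: contraTneq Ha => ->; rewrite rootE horner_coef0 coef_map /=.
by rewrite fmorph_eq0; case: Hf.
Qed.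

Lemma orb_inj i j : orb i = orb j -> (i < j)%N -> orb (j - i) = a.
Proof.
move=> e lij; apply: (@qf_inj L p (k * 2 * i) chL).
rewrite !qfE -/orb /orb -!exprM expnM -Q_eq -expnD subnK ?(ltnW lij) //.
Qed.

Lemma orb_period : exists m, (0 < m <= n)%N /\ orb m = a.
Proof.
pose g (i : 'I_n.+1) := orb i.
case: (boolP [exists i : 'I_n.+1, exists j : 'I_n.+1, (i < j)%N && (g i == g j)]).
  case/existsP=> i /existsP [j /andP [lij /eqP e]].
  exists (j - i)%N; split; last exact: orb_inj.
  by rewrite subn_gt0 lij /= (leq_trans (leq_subr _ _)) // -ltnS.
move=> H; exfalso.
have ginj : injective g.
  move=> i j e; apply/val_inj/eqP; case: (ltngtP i j) => // lij; exfalso; move/negP: H; apply.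
    by apply/existsP; exists i; apply/existsP; exists j; rewrite lij e eqxx.
  by apply/existsP; exists j; apply/existsP; exists i; rewrite lij e eqxx.
have := max_poly_roots fL_neq0 (rs := map g (enum 'I_n.+1)).
rewrite size_map size_enum_ord size_map_poly Hdeg ltnn.
have hu : uniq (map g (enum 'I_n.+1)) by rewrite map_inj_uniq ?enum_uniq.
have ha : all (root fL) (map g (enum 'I_n.+1)).
  by apply/allP=> z /mapP [i _ ->]; apply: root_orb.
by move/(_ ha hu).
Qed.


Lemma orbS j : orb j.+1 = orb j ^+ Q.
Proof. by rewrite /orb expnSr exprM. Qed.

Lemma key : [/\ orb n = a, (forall j, (0 < j < n)%N -> orb j != a),
   fL = \prod_(z <- mkseq orb n) ('X - z%:P) & uniq (mkseq orb n)].
Proof.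
have [m [hm em]] := orb_period.
have exm : exists m, (0 < m)%N && (orb m == a).
  by exists m; case/andP: hm => -> _; rewrite em eqxx.
case: (ex_minnP exm) => k0 /andP[k0pos /eqP ek0] k0min.
have orb_dist i j : (i < j < k0)%N -> orb i != orb j.
  case/andP=> lij ljk; apply/eqP=> e.
  have := k0min (j - i)%N; rewrite subn_gt0 lij orb_inj // eqxx => /(_ isT).
  by rewrite leqNgt (leq_ltn_trans (leq_subr _ _) ljk).
pose g := \prod_(z <- mkseq orb k0) ('X - z%:P).
have gE : g = \prod_(j < k0) ('X - (orb j)%:P).
  rewrite /g /mkseq big_map.
  have -> : iota 0 k0 = index_iota 0 k0 by rewrite /index_iota subn0.
  by rewrite big_mkord.
have urs : uniq (mkseq orb k0).
  rewrite /mkseq map_inj_in_uniq ?iota_uniq // => i j.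
  rewrite !mem_iota !add0n => hi hj e; apply/eqP; case: (ltngtP i j) => // lij.
    by move: (orb_dist i j); rewrite lij hj e eqxx => /(_ isT).
  by move: (orb_dist j i); rewrite lij hi e eqxx => /(_ isT).
have gfix : map_poly (qf (k * 2) chL) g = g.
  rewrite gE rmorph_prod /=.
  under eq_bigr do rewrite map_polyXsubC /= qfE -Q_eq -orbS.
  case: k0 k0pos k0min orb_dist {exm urs g gE} ek0 => // K _ _ _ ek0.
  rewrite big_ord_recr big_ord_recl /= ek0 mulrC; congr (_ * _).
have coef_fix i : g`_i ^+ Q = g`_i.
  by rewrite -{2}gfix coef_map /= qfE -Q_eq.
pose pre (y : L) := odflt 0 [pick c | phi c == y].
pose h := \poly_(i < size g) pre g`_i.
have hg : map_poly phi h = g.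
  apply/polyP => i; rewrite coef_map coef_poly /=; case: ltnP => hi; last first.
    by rewrite rmorph0 nth_default.
  rewrite /pre; case: pickP => [c /eqP //|none].
  have [c hc] := fixed_in_image phi (etrans (congr1 _ HF) (coef_fix i)).
  by move: (none c); rewrite hc eqxx.
have gdiv : g %| fL.
  apply: uniq_roots_dvdp; last by rewrite uniq_rootsE.
  by apply/allP=> z /mapP [j _ ->]; apply: root_orb.
have hdiv : h %| f by rewrite -(dvdp_map phi) hg.
have sg : size g = k0.+1 by rewrite size_prod_XsubC size_mkseq.
have sh : size h = k0.+1 by rewrite -(size_map_poly phi) hg.
have hf : h %= f.
  case: Hf => _ _ [_ irrf] _; apply: irrf => //.
  by rewrite sh eqSS -lt0n.
have k0n : k0 = n.
  by move/eqp_size: hf; rewrite sh Hdeg => -[].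
subst k0; split => //.
- move=> j /andP [j0 jn]; apply/negP => /eqP e.
  by move: (k0min j); rewrite j0 e eqxx leqNgt jn => /(_ isT).
- apply/esym/eqP; rewrite -eqp_monic ?monic_prod_XsubC ?map_monic //; last by case: Hf.
  by rewrite -/g -hg eqp_map.
Qed.


Lemma recip_root : (map_poly phi (recip f)).[a^-1] = 0.
Proof.
have a0 := a_neq0.
rewrite /recip map_polyZ hornerZ; apply/eqP; rewrite mulf_eq0; apply/orP; right.
set P := \poly_(i < size f) _.
have sg : (size (map_poly phi P) <= n.+1)%N.
  by rewrite size_map_poly -Hdeg size_poly.
rewrite (horner_coef_wide _ sg).
under eq_bigr => i _ do rewrite coef_map /P coef_poly Hdeg ltn_ord.
rewrite -(mulIr_eq0 _ (mulIf (expf_neq0 n a0))) mulr_suml.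
rewrite [X in X == 0](_ : _ = fL.[a]); first by rewrite -rootE.
rewrite horner_coef size_map_poly Hdeg.
rewrite (reindex_inj rev_ord_inj) /=; apply: eq_bigr => i _.
have hi : (i <= n)%N by rewrite -ltnS.
rewrite coef_map subSS (subKn hi) -mulrA; congr (_ * _).
have -> : a ^+ n = a ^+ (n - i) * a ^+ i by rewrite -exprD subnK.
by rewrite exprVn mulrA mulVf ?mul1r // expf_neq0.
Qed.

Lemma root_sigma : root fL ((a ^+ (p ^ k)%N)^-1).
Proof.
case: Hf => _ fE _ _.
have -> : fL = map_poly (qf k chL) (map_poly phi (recip f)).
  rewrite {1}fE /conj_recip /pconj -!map_poly_comp; apply: eq_map_poly => c /=.
  by rewrite qfE rmorphXn.
by rewrite rootE -exprVn -qfE horner_map recip_root rmorph0.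
Qed.


Lemma core_d : exists d, in_D (p ^ k) n d /\ d.-primitive_root a.
Proof.
have a0 := a_neq0.
have [orbn orbne fLE _] := key.
have rs := root_sigma; rewrite fLE root_prod_XsubC in rs.
case/mapP: rs => i; rewrite mem_iota add0n => /andP[_ hi] e.
set q := (p ^ k)%N in e *.
have n0 : (0 < n)%N by apply: leq_trans Hn.
have P1 : iter (2 * n) (sig q) a = a.
  by rewrite iter_sig oddM /= expnM; exact: orbn.
have P2 : iter (2 * i) (sig q) a = iter 1 (sig q) a.
  by rewrite !iter_sig oddM /= expn1 e /orb expnM.
have P3 : iter ((2 * n).-1 + 2 * i) (sig q) a = a.
  rewrite iterD P2 -iterD addn1 prednK ?P1 //.
  by rewrite muln_gt0.
set B := ((2 * n).-1 + 2 * i)%N in P3.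
have oB : odd B.
  rewrite /B oddD oddM /= addbF.
  by rewrite -subn1 oddB ?muln_gt0 // oddM.
have n2 : (0 < 2 * n)%N by rewrite muln_gt0.
have Pg := iter_gcd n2 P1 P3.
have gn : (gcdn (2 * n) B %| n)%N.
  have og : odd (gcdn (2 * n) B).
    apply: contraLR oB; rewrite -!dvdn2 => h2; apply: dvdn_trans h2 (dvdn_gcdr _ _).
  rewrite -(@Gauss_dvdr _ 2) ?coprimen2 // ?dvdn_gcdl //.
have Pn : iter n (sig q) a = a.
  by case/dvdnP: gn => c ->; apply: iter_period.
rewrite iter_sig Hodd in Pn.
have an : a ^+ (q ^ n) = a^-1 by rewrite -[in RHS]Pn invrK.
have a1 : a ^+ (q ^ n + 1) = 1 by rewrite exprD an expr1 mulVf.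
have qn0 : (0 < q ^ n + 1)%N by rewrite addn1.
have [d prim dd] := prim_order_exists qn0 a1.
exists d; split => //; split => //; first exact: prim_order_gt0 prim.
move=> m mn; apply/negP => dm.
have am : a ^+ (q ^ m + 1) = 1 by apply/eqP; rewrite -(prim_order_dvd prim).
have amq : a ^+ (q ^ m) = a^-1.
  by apply: (mulIf a0); rewrite mulVf // -am exprD expr1.
have orbm : orb (if m == 0 then 1 else m)%N = a.
  case: eqP => [m0 | m0].
    subst m; rewrite /orb expn1; apply/eqP.
    rewrite -{2}(expr1 a) (eq_prim_root_expr prim).
    have : (d <= 2)%N by apply: dvdn_leq.
    case: d prim dd dm {am} => [|[|[|]]] //= prim dd dm _.
      by rewrite !modn1.
    rewrite !modn2 oddX /=.
    by move: dd; rewrite dvdn2 oddD oddX eqn0Ngt n0 /=; case: (odd _).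
  rewrite /orb -expnM mulnC expnM [(_ ^ 2)%N]expnS expn1 exprM amq exprVn.
  by rewrite amq invrK.
have := orbne (if m == 0 then 1 else m)%N; rewrite orbm eqxx => h; suff: false by [].
apply: h.
by case: eqP => [_ |/eqP m0]; rewrite ?lt0n ?m0 ?mn //= (leq_trans _ Hn).
Qed.


Lemma map_XnsubC t : map_poly phi ('X^t - 1) = 'X^t - 1.
Proof. by rewrite rmorphB /= map_polyXn rmorph1. Qed.

Lemma order_d d : d.-primitive_root a -> is_poly_order f d.
Proof.
move=> prim; have [_ _ fLE urs] := key.
split; first exact: prim_order_gt0 prim.
- rewrite -(dvdp_map phi) map_XnsubC fLE; apply: uniq_roots_dvdp; last by rewrite uniq_rootsE.
  apply/allP => z /mapP [j _ ->]; rewrite rootE !hornerE /orb exprAC.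
  by rewrite (prim_expr_order prim) expr1n subrr.
- move=> t t0; rewrite -(dvdp_map phi) map_XnsubC => hd.
  have := root_dvdp hd Ha; rewrite rootE !hornerE subr_eq0 -(prim_order_dvd prim).
  by move/dvdn_leq; apply.
Qed.

End Core.

Theorem mainTheorem5 (q n : nat) (F : finFieldType)
    (Hq : exists p k : nat, [/\ prime p, (0 < k)%N & q = (p ^ k)%N])
    (HF : #|F| = (q ^ 2)%N)
    (Hn : (3 <= n)%N) (Hodd : odd n)
    (f : {poly F}) (Hdeg : size f = n.+1) (Hf : SCRIM q f) :
  (exists s : nat, is_poly_order f s /\ in_D q n s) /\
  (forall (L : finFieldType) (iota : {rmorphism F -> L}) (alpha : L),
      #|L| = (q ^ (2 * n))%N ->
      root (map_poly iota f) alpha ->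
      exists d : nat, in_D q n d /\ d.-primitive_root alpha).
Proof.
case: Hq => p [k [Hp Hk Hqe]]; subst q.
have chF : p \in [pchar F].
  have e : #|F| = (p ^ (k * 2))%N by rewrite HF expnM.
  exact: card_finPcharP e Hp.
split; last first.
  move=> L iota alpha _ Hr.
  have [d [hd prim]] := core_d HF chF Hn Hodd Hdeg Hf Hr.
  by exists d.
have [K [FtoK _]] := countable_algebraic_closure F.
have : size (map_poly FtoK f) != 1%N.
  by rewrite size_map_poly Hdeg eqSS -lt0n (leq_trans _ Hn).
case/closed_rootP => alpha Hr.
have [d [hd prim]] := core_d HF chF Hn Hodd Hdeg Hf Hr.
exists d; split; last exact: hd.
exact: (order_d HF chF Hdeg Hf Hr prim).
Qed.
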